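(* Consider the system $\mathbf{x}_{k+1}=f_k(\mathbf{x}_k,\mathbf{w}_k)$, $\mathbf{y}_k=g_k(\mathbf{x}_k,\mathbf{v}_k)$, $k\in\mathbb{N}_0$, and assume that for every $k\in\mathbb{N}_0$ the uncertain variables $\mathbf{w}_0,\dots,\mathbf{w}_k,\mathbf{v}_0,\dots,\mathbf{v}_k,\mathbf{x}_0$ are unrelated. Then: (i) for every $k\in\mathbb{Z}_+$ and $y_{0:k-1}\in\llbracket\mathbf{y}_{0:k-1}\rrbracket$, \[ \llbracket\mathbf{x}_k\,|\,y_{0:k-1}\rrbracket=f_{k-1}\big(\llbracket\mathbf{x}_{k-1}\,|\,y_{0:k-1}\rrbracket,\llbracket\mathbf{w}_{k-1}\rrbracket\big); \] (ii) for every $k\in\mathbb{N}_0$ and $y_{0:k}\in\llbracket\mathbf{y}_{0:k}\rrbracket$, \[ \llbracket\mathbf{x}_k\,|\,y_{0:k}\rrbracket=\Big[\bigcup_{v_k\in\llbracket\mathbf{v}_k\rrbracket}g_{k,v_k}^{-1}(\{y_k\})\Big]\cap\llbracket\mathbf{x}_k\,|\,y_{0:k-1}\rrbracket, \] where $g_{k,v_k}^{-1}(\{y_k\}):=\{x\in\llbracket\mathbf{x}_k\rrbracket: g_k(x,v_k)=y_k\}$ and $\llbracket\mathbf{x}_0\,|\,y_{0:-1}\rrbracket:=\llbracket\mathbf{x}_0\rrbracket$. In particular these sets give the optimal SMF $X_k^*(y_{0:k})=\llbracket\mathbf{x}_k\,|\,y_{0:k}\rrbracket$.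
   Context: Uncertain variables: fix a nonempty set $\Omega$. An uncertain variable is a (measurable) function $\mathbf{x}\colon\Omega\to\mathcal{X}$; a realization is $x=\mathbf{x}(\omega)$. Tuples such as $\mathbf{y}_{0:k}:=(\mathbf{y}_0,\dots,\mathbf{y}_k)$ are regarded as uncertain variables $\omega\mapsto(\mathbf{y}_0(\omega),\dots,\mathbf{y}_k(\omega))$, with realizations $y_{0:k}$. Range: $\llbracket\mathbf{x}\rrbracket:=\{\mathbf{x}(\omega):\omega\in\Omega\}$; joint range $\llbracket\mathbf{u}_1,\dots,\mathbf{u}_r\rrbracket:=\{(\mathbf{u}_1(\omega),\dots,\mathbf{u}_r(\omega)):\omega\in\Omega\}$. Conditional range: $\llbracket\mathbf{x}\,|\,y\rrbracket:=\{\mathbf{x}(\omega):\omega\in\Omega,\ \mathbf{y}(\omega)=y\}$ (conditioning on several values means conditioning on the tuple). Unrelatedness: $\mathbf{u}_1,\dots,\mathbf{u}_r$ are unrelated if $\llbracket\mathbf{u}_1,\dots,\mathbf{u}_r\rrbracket=\llbracket\mathbf{u}_1\rrbracket\times\cdots\times\llbracket\mathbf{u}_r\rrbracket$. System: $\mathbf{x}_k$ takes values in $\llbracket\mathbf{x}_k\rrbracket\subseteq\mathbb{R}^n$, $\mathbf{w}_k$ in $\llbracket\mathbf{w}_k\rrbracket\subseteq\mathbb{R}^p$, $\mathbf{y}_k$ in $\llbracket\mathbf{y}_k\rrbracket\subseteq\mathbb{R}^m$, $\mathbf{v}_k$ in $\llbracket\mathbf{v}_k\rrbracket\subseteq\mathbb{R}^q$;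 $f_k\colon\llbracket\mathbf{x}_k\rrbracket\times\llbracket\mathbf{w}_k\rrbracket\to\llbracket\mathbf{x}_{k+1}\rrbracket$, $g_k\colon\llbracket\mathbf{x}_k\rrbracket\times\llbracket\mathbf{v}_k\rrbracket\to\llbracket\mathbf{y}_k\rrbracket$, with $\mathbf{x}_{k+1}(\omega)=f_k(\mathbf{x}_k(\omega),\mathbf{w}_k(\omega))$ and $\mathbf{y}_k(\omega)=g_k(\mathbf{x}_k(\omega),\mathbf{v}_k(\omega))$. For sets, $f(S,T):=\{f(s,t):s\in S,t\in T\}$. An SMF is a family of set-valued maps $X_k$ with $\{\mathbf{x}_k(\omega):\mathbf{y}_{0:k}(\omega)=y_{0:k}\}\subseteq X_k(y_{0:k})$ for all $k,y_{0:k}$; it is optimal if it is contained in every other SMF for all $k,y_{0:k}$. *)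

(* Defs.v *)
From mathcomp Require Import all_boot all_algebra.
From mathcomp Require Import boolp classical_sets reals.
Set Implicit Arguments. Unset Strict Implicit. Unset Printing Implicit Defensive.
Local Open Scope classical_set_scope.

Definition urange (Omega T : Type) (u : Omega -> T) : set T :=
  [set u om | om in [set: Omega]].

(* A realization y_{0:k-1} is encoded by the
   values yr 0, ..., yr (k-1) of yr : nat -> Y (later values are ignored).
   For k = 0 there is no condition, so [[ X | y_{0:-1} ]] = [[ X ]]. *)
Definition cond_range (Omega T Y : Type) (X : Omega -> T) (y : nat -> Omega -> Y)
  (k : nat) (yr : nat -> Y) : set T :=
  [set X om | om in [set om | forall i, (i < k)%N -> y i om = yr i]].

Definition in_joint_range (Omega Y : Type) (y : nat -> Omega -> Y) (k : nat)
  (yr : nat -> Y) : Prop :=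
  exists om : Omega, forall i, (i < k)%N -> y i om = yr i.

Definition fimg2 (A B C : Type) (f : A -> B -> C) (S : set A) (T : set B) : set C :=
  [set c | exists a, S a /\ exists b, T b /\ f a b = c].

(* Unrelatedness of w_0..w_k, v_0..v_k, x_0: their joint range equals the product
   of their individual ranges.  The inclusion of the joint range in the product is
   automatic, so this is the (non-trivial) reverse inclusion, written out. *)
Definition unrelated_wvx (Omega W V X : Type) (w : nat -> Omega -> W)
  (v : nat -> Omega -> V) (x0 : Omega -> X) (k : nat) : Prop :=
  forall (a : nat -> W) (b : nat -> V) (c : X),
    (forall i, (i <= k)%N -> urange (w i) (a i)) ->
    (forall i, (i <= k)%N -> urange (v i) (b i)) ->
    urange x0 c ->
    exists om : Omega,
      (forall i, (i <= k)%N -> w i om = a i) /\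
      (forall i, (i <= k)%N -> v i om = b i) /\ x0 om = c.

Definition is_SMF (Omega Xs Y : Type) (x : nat -> Omega -> Xs) (y : nat -> Omega -> Y)
  (Xf : nat -> (nat -> Y) -> set Xs) : Prop :=
  (forall k (yr yr' : nat -> Y), (forall i, (i <= k)%N -> yr i = yr' i) ->
      Xf k yr = Xf k yr') /\
  (forall k (yr : nat -> Y),
      [set x k om | om in [set om | forall i, (i <= k)%N -> y i om = yr i]]
        `<=` Xf k yr).

Definition is_optimal_SMF (Omega Xs Y : Type) (x : nat -> Omega -> Xs)
  (y : nat -> Omega -> Y) (Xf : nat -> (nat -> Y) -> set Xs) : Prop :=
  is_SMF x y Xf /\
  forall Xf', is_SMF x y Xf' -> forall k yr, Xf k yr `<=` Xf' k yr.

(* Main.v *)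
Require Import Defs.
From mathcomp Require Import all_boot all_algebra.
From mathcomp Require Import boolp classical_sets reals.
Local Open Scope classical_set_scope.

Lemma x_agree {Omega X W : Type} {x : nat -> Omega -> X} {w : nat -> Omega -> W}
  {f : nat -> X -> W -> X} :
  (forall k om, x k.+1 om = f k (x k om) (w k om)) ->
  forall om om', x 0%N om = x 0%N om' ->
  forall k, (forall i, (i < k)%N -> w i om = w i om') -> x k om = x k om'.
Proof.
move=> hx om om' h0; elim=> [|k IH] hw //.
rewrite !hx IH ?hw //; move=> i hi; apply: hw; exact: ltnW.
Qed.

Theorem theorem2 (R : realType) (n p m q : nat) (Omega : Type)
  (x : nat -> Omega -> 'rV[R]_n) (w : nat -> Omega -> 'rV[R]_p)
  (y : nat -> Omega -> 'rV[R]_m) (v : nat -> Omega -> 'rV[R]_q)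
  (f : nat -> 'rV[R]_n -> 'rV[R]_p -> 'rV[R]_n)
  (g : nat -> 'rV[R]_n -> 'rV[R]_q -> 'rV[R]_m) :
  inhabited Omega ->
  (forall k om, x k.+1 om = f k (x k om) (w k om)) ->
  (forall k om, y k om = g k (x k om) (v k om)) ->
  (forall k, unrelated_wvx w v (x 0%N) k) ->
  (* (i) *)
  (forall (j : nat) (yr : nat -> 'rV[R]_m),
     in_joint_range y j.+1 yr ->
     cond_range (x j.+1) y j.+1 yr =
       fimg2 (f j) (cond_range (x j) y j.+1 yr) (urange (w j))) /\
  (* (ii) *)
  (forall (k : nat) (yr : nat -> 'rV[R]_m),
     in_joint_range y k.+1 yr ->
     cond_range (x k) y k.+1 yr =
       (\bigcup_(vk in urange (v k))
          [set xx | urange (x k) xx /\ g k xx vk = yr k])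
       `&` cond_range (x k) y k yr) /\
  (* optimal SMF *)
  is_optimal_SMF x y (fun k yr => cond_range (x k) y k.+1 yr).
Proof.
move=> _ hx hy hu.
have rng : forall (T : Type) (u : Omega -> T) om, urange u (u om).
  by move=> T u om; exists om.
split.
  move=> j yr _; apply/seteqP; split => z /=.
  - case=> om /= hom <-; rewrite hx.
    exists (x j om); split; first by exists om.
    by exists (w j om); split => //; apply: rng.
  - case=> a [[om /= hom <-]] [b [[om0 _ hb] <-]].
    have ha : forall i, (i <= j)%N -> urange (w i) (if i == j then b else w i om).
      by move=> i _; case: eqP => [->|_]; [rewrite /urange; exists om0|apply: rng].
    have [om2 [hw [hv h0]]] := hu j (fun i => if i == j then b else w i om)
       (fun i => v i om) (x 0%N om)
       ha
       (fun i _ => rng _ _ _) (rng _ _ _).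
    have hxa : forall i, (i <= j)%N -> x i om2 = x i om.
      move=> i hi; apply: (x_agree hx _ _ h0) => l hl.
      rewrite hw; last by apply: ltnW; apply: leq_trans hl hi.
      by rewrite ifF //; apply/eqP => e; move: hl; rewrite e ltnNge hi.
    exists om2.
      move=> i hi /=; rewrite -hom // !hy hv ?hxa //.
    by rewrite hx hxa // hw // eqxx.
split.
  move=> k yr _; apply/seteqP; split => z /=.
  - case=> om /= hom <-; split.
      exists (v k om); first by apply: rng.
      by split; [apply: rng | rewrite -hy hom].
    by exists om => // i hi; apply: hom; apply: ltnW.
  - case=> -[vk [om0 _ hvk] [_ hg]] [om /= hom ez]; subst z.
    have ha : forall i, (i <= k)%N -> urange (v i) (if i == k then vk else v i om).
      by move=> i _; case: eqP => [->|_]; [rewrite /urange; exists om0|apply: rng].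
    have [om2 [hw [hv h0]]] := hu k (fun i => w i om)
       (fun i => if i == k then vk else v i om) (x 0%N om)
       (fun i _ => rng _ _ _)
       ha
       (rng _ _ _).
    have hxa : forall i, (i <= k)%N -> x i om2 = x i om.
      move=> i hi; apply: (x_agree hx _ _ h0) => l hl.
      by rewrite hw //; apply: ltnW; apply: leq_trans hl hi.
    exists om2; last by rewrite hxa.
    move=> i /=; rewrite ltnS leq_eqVlt => /orP [/eqP ->|hi].
      by rewrite hy hv // eqxx hxa.
    rewrite hy hv ?(ltnW hi) // ifF; last by apply/eqP => e; move: hi; rewrite e ltnn.
    by rewrite hxa ?(ltnW hi) // -hy hom.
have sub : forall Xf', is_SMF x y Xf' ->
    forall k yr, cond_range (x k) y k.+1 yr `<=` Xf' k yr.
  move=> Xf' [_ h] k yr z [om hom <-]; apply: h; exists om => //= i hi; exact: hom.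
split; last exact: sub.
split.
  move=> k yr yr' he; apply/seteqP; split => z [om hom <-]; exists om => //= i hi.
    by rewrite -he ?hom // -ltnS.
  by rewrite he ?hom // -ltnS.
move=> k yr z [om hom <-]; exists om => //= i hi; apply: hom; by rewrite -ltnS.
Qed.
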